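(* Let $A$ be a unique factorization domain and $R$ a subring of $A$ whose group of units equals that of $A$. Consider: (i) $\operatorname{Irr}R\subset\operatorname{Irr}A$; (ii) $\operatorname{Sqf}R\subset\operatorname{Sqf}A$; (iii) $\operatorname{Irr}R\subset\operatorname{Sqf}A$. Then (i) implies (ii) and (ii) implies (iii).
   Context: For a commutative ring $R$, $\operatorname{Irr}R$ is the set of irreducible elements of $R$ and $\operatorname{Sqf}R$ the set of square-free elements, where $a\in R$ is square-free if it cannot be written as $a=b^2c$ with $b,c\in R$ and $b$ not a unit of $R$. *)

(* Defs.v *)
From HB Require Import structures.
From mathcomp Require Import all_boot all_order all_algebra all_fingroup.
Set Implicit Arguments. Unset Strict Implicit. Unset Printing Implicit Defensive.
Import GRing.Theory.
Local Open Scope ring_scope.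

(* A subring R of a commutative ring A is represented by its carrier
   S : {pred A}, assumed subring_closed. *)

Definition unit_in (A : comNzRingType) (S : {pred A}) (x : A) : Prop :=
  x \in S /\ exists2 y, y \in S & x * y = 1.

Definition irr_in (A : comNzRingType) (S : {pred A}) (a : A) : Prop :=
  [/\ a \in S, a != 0, ~ unit_in S a &
      forall b c, b \in S -> c \in S -> a = b * c -> unit_in S b \/ unit_in S c].

Definition sqf_in (A : comNzRingType) (S : {pred A}) (a : A) : Prop :=
  a \in S /\
  ~ (exists b c, [/\ b \in S, c \in S, a = b ^+ 2 * c & ~ unit_in S b]).

Definition Irr (A : comNzRingType) : A -> Prop := irr_in (@predT A).
Definition Sqf (A : comNzRingType) : A -> Prop := sqf_in (@predT A).

Definition associated (A : comUnitRingType) (x y : A) : Prop :=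
  exists2 u, u \is a GRing.unit & x = u * y.

Definition UFD (A : idomainType) : Prop :=
  (forall a : A, a != 0 -> a \isn't a GRing.unit ->
     exists2 s : seq A, (forall x, x \in s -> Irr x) & a = \prod_(x <- s) x)
  /\
  (forall s t : seq A, (forall x, x \in s -> Irr x) -> (forall x, x \in t -> Irr x) ->
     \prod_(x <- s) x = \prod_(x <- t) x ->
     exists e : size s = size t, exists sigma : 'S_(size s),
       forall i : 'I_(size s),
         associated (nth 0 s i) (nth 0 t (cast_ord e (sigma i)))).

(* Main.v *)
Require Import Defs.
From HB Require Import structures.
From mathcomp Require Import all_boot all_order all_algebra all_fingroup.
From mathcomp Require Import ring.
From Stdlib Require Import Classical.
Set Implicit Arguments. Unset Strict Implicit.
Import GRing.Theory.
Local Open Scope ring_scope.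

Section Aux.
Variable A : idomainType.

Lemma unit_predT (x : A) : unit_in predT x <-> x \is a GRing.unit.
Proof.
split; first by case=> _ [y _ h]; apply/unitrPr; exists y.
by move=> hx; split=> //; exists x^-1 => //; rewrite mulrV.
Qed.

Lemma Irr_nz (p : A) : Irr p -> p != 0.
Proof. by case. Qed.

Lemma Irr_nu (p : A) : Irr p -> p \isn't a GRing.unit.
Proof. by case=> _ _ h _; apply/negP => /unit_predT. Qed.

Lemma Irr_unitM (u p : A) : u \is a GRing.unit -> Irr p -> Irr (u * p).
Proof.
move=> hu hp; have pnz := Irr_nz hp; have pnu := Irr_nu hp.
split=> //.
- by rewrite mulf_eq0 negb_or pnz andbT; apply/negP=> /eqP u0; move: hu; rewrite u0 unitr0.
- by move/unit_predT; rewrite unitrM hu /=; apply/negP.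
- move=> b c _ _ e.
  case: hp => _ _ _ /(_ (u^-1 * b) c isT isT).
  case; first by rewrite -mulrA -e mulKr.
  + move=> /unit_predT h; left; apply/unit_predT.
    by move: h; rewrite unitrM unitrV hu.
  + by right.
Qed.

Lemma assoc_unit (x y : A) : associated x y -> exists2 u, u \is a GRing.unit & x = u * y.
Proof. by []. Qed.

Lemma nprod_unit (s : seq A) (x : A) : x \isn't a GRing.unit -> x = \prod_(y <- s) y -> (0 < size s)%N.
Proof. by case: s => //= hx; rewrite big_nil => ex; move: hx; rewrite ex unitr1. Qed.

Lemma not_irr (S : {pred A}) (x : A) : x \in S -> x != 0 -> ~ unit_in S x -> ~ irr_in S x ->
  exists b c, [/\ b \in S, c \in S, x = b * c, ~ unit_in S b & ~ unit_in S c].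
Proof.
move=> hx nz nu ni; apply: NNPP => H; apply: ni; split=> // b c hb hc e.
apply: NNPP => H2; apply: H; exists b, c; split=> //; tauto.
Qed.

Lemma atomic (S : {pred A}) : UFD A -> subring_closed S ->
  (forall x : A, unit_in S x <-> x \is a GRing.unit) ->
  forall x, x \in S -> x != 0 -> x \isn't a GRing.unit ->
  exists2 s : seq A, (forall y, y \in s -> irr_in S y) & x = \prod_(y <- s) y.
Proof.
move=> [Hex Hun] Ssub hU x xS xnz xnu.
have [t ht ext] := Hex x xnz xnu.
suff H : forall n x, x \in S -> x != 0 -> x \isn't a GRing.unit ->
  forall t : seq A, (forall y, y \in t -> Irr y) -> x = \prod_(y <- t) y -> (size t <= n)%N ->
  exists2 s : seq A, (forall y, y \in s -> irr_in S y) & x = \prod_(y <- s) y.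
  exact: (H (size t) x xS xnz xnu t ht ext).
clear x xS xnz xnu t ht ext.
elim=> [|n IH] x xS xnz xnu t ht ext hn.
  by move: (nprod_unit xnu ext) hn; case: (size t).
case: (classic (irr_in S x)) => hi.
  by exists [:: x]; [move=> y; rewrite inE => /eqP ->|rewrite big_seq1].
have xnS : ~ unit_in S x by move/hU; apply/negP.
have [b [c [bS cS exbc bnu cnu]]] := not_irr xS xnz xnS hi.
have bnz : b != 0 by apply/negP=> /eqP b0; move: xnz; rewrite exbc b0 mul0r eqxx.
have cnz : c != 0 by apply/negP=> /eqP c0; move: xnz; rewrite exbc c0 mulr0 eqxx.
have bnU : b \isn't a GRing.unit by apply/negP=> /hU.
have cnU : c \isn't a GRing.unit by apply/negP=> /hU.
have [tb htb eb] := Hex b bnz bnU.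
have [tc htc ec] := Hex c cnz cnU.
have htbc : forall y, y \in tb ++ tc -> Irr y.
  by move=> y; rewrite mem_cat => /orP[/htb|/htc].
have epr : \prod_(y <- tb ++ tc) y = \prod_(y <- t) y by rewrite big_cat /= -eb -ec -exbc.
have [e _] := Hun (tb ++ tc) t htbc ht epr.
have pb := nprod_unit bnU eb; have pc := nprod_unit cnU ec.
move: e; rewrite size_cat => e.
have [sb hsb esb] : exists2 s : seq A, (forall y, y \in s -> irr_in S y) & b = \prod_(y <- s) y.
  by apply: (IH b bS bnz bnU tb htb eb); rewrite -ltnS; apply: leq_trans hn; rewrite -e -addn1 leq_add2l.
have [sc hsc esc] : exists2 s : seq A, (forall y, y \in s -> irr_in S y) & c = \prod_(y <- s) y.
  by apply: (IH c cS cnz cnU tc htc ec); rewrite -ltnS; apply: leq_trans hn; rewrite -e -add1n leq_add2r.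
exists (sb ++ sc); first by move=> y; rewrite mem_cat => /orP[/hsb|/hsc].
by rewrite big_cat /= -esb -esc.
Qed.

End Aux.

Theorem lemma3p1 (A : idomainType) (S : {pred A}) :
  UFD A -> subring_closed S ->
  (forall x : A, unit_in S x <-> x \is a GRing.unit) ->
  ((forall a, irr_in S a -> Irr a) -> (forall a, sqf_in S a -> Sqf a)) /\
  ((forall a, sqf_in S a -> Sqf a) -> (forall a, irr_in S a -> Sqf a)).
Proof.
move=> hUFD Ssub hU.
have [S1 SB SM] := Ssub.
have S0 : 0 \in S by rewrite -(subrr 1); apply: SB.
have Sprod : forall (I : Type) (r : seq I) (P : pred I) (F : I -> A),
    (forall i, P i -> F i \in S) -> \prod_(i <- r | P i) F i \in S.
  move=> I r P F hF; elim: r => [|x r IHr]; first by rewrite big_nil.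
  by rewrite big_cons; case: (boolP (P x)) => // Px; apply: SM => //; apply: hF.
split; last first.
  move=> hsq a [aS anz anu hdec]; apply: hsq; split=> //.
  move=> [b [c [bS cS eabc bnu]]].
  have [|//|] := hdec b (b * c) bS (SM _ _ bS cS); first by rewrite eabc expr2 mulrA.
  move=> /hU; rewrite unitrM => /andP[/hU bu _]; exact: bnu.
move=> hI a [aS hna]; split=> //.
move=> [b [c [_ _ eabc bnu]]].
have bnU : b \isn't a GRing.unit by apply/negP=> /unit_predT.
have anz : a != 0.
  apply/negP=> /eqP a0; apply: hna; exists 0, 0; split => //.
  - by rewrite a0 mulr0.
  - by move/hU; rewrite unitr0.
have bnz : b != 0 by apply/negP=> /eqP b0; move: anz; rewrite eabc b0 expr2 !mul0r eqxx.
have cnz : c != 0 by apply/negP=> /eqP c0; move: anz; rewrite eabc c0 mulr0 eqxx.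
have anU : a \isn't a GRing.unit.
  by apply/negP; rewrite eabc unitrM expr2 unitrM => /andP[/andP[h _] _]; move/negP: bnU.
have [s hs es] := atomic hUFD Ssub hU aS anz anU.
have hsI : forall y, y \in s -> Irr y by move=> y /hs /hI.
case: hUFD => Hex Hun.
have [tb htb eb] := Hex b bnz bnU.
case: tb htb eb (nprod_unit bnU eb) => // p tb' htb eb _.
have pI : Irr p by apply: htb; rewrite inE eqxx.
set B := \prod_(y <- tb') y.
have eb' : b = p * B by rewrite eb big_cons.
set d := B * B * c.
have ea : a = p * (p * d) by rewrite eabc eb' /d; ring.
have dnz : d != 0.
  by apply/negP=> /eqP d0; move: anz; rewrite ea d0 !mulr0 eqxx.
have [p' [r [p'I p'p rI ear]]] : exists p' r, [/\ Irr p', associated p' p,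
    (forall y, y \in r -> Irr y) & a = p * (p' * \prod_(y <- r) y)].
  case: (boolP (d \is a GRing.unit)) => du.
    exists (d * p), [::]; split.
    - exact: Irr_unitM.
    - by exists d.
    - by [].
    - by rewrite big_nil mulr1 ea (mulrC d).
  have [r hr er] := Hex d dnz du.
  exists p, r; split=> //; first by exists 1; rewrite ?unitr1 ?mul1r.
  by rewrite -er.
set L := [:: p, p' & r].
have hL : forall y, y \in L -> Irr y.
  by move=> y; rewrite !inE => /orP[/eqP->|/orP[/eqP->|/rI]].
have eLs : \prod_(y <- s) y = \prod_(y <- L) y by rewrite -es ear !big_cons.
have [e [sg hsg]] := Hun s L hsI hL eLs.
have k0lt : (0 < size L)%N by [].
have k1lt : (1 < size L)%N by [].
set i := (sg^-1)%g (cast_ord (esym e) (Ordinal k0lt)).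
set j := (sg^-1)%g (cast_ord (esym e) (Ordinal k1lt)).
have hi := hsg i; have hj := hsg j.
rewrite /i /j !permKV !cast_ordKV /= in hi hj.
have ij : i != j.
  apply/negP=> /eqP /perm_inj /(congr1 (cast_ord e)); rewrite !cast_ordKV.
  by move/(congr1 val).
have [w1 w1u e1] := hi.
have [w2 w2u e2] := hj.
have [w3 w3u e3] := p'p.
set si := nth 0 s i in e1; set sj := nth 0 s j in e2.
have sjI : irr_in S sj by apply: hs; apply: mem_nth.
set u := w1 * (w2 * w3)^-1.
have uU : u \is a GRing.unit by rewrite unitrM w1u unitrV unitrM w2u w3u.
have eij : si = u * sj.
  have w23 : w2 * w3 \is a GRing.unit by rewrite unitrM w2u w3u.
  rewrite e1 e2 e3 /u -!mulrA; congr (_ * _); rewrite (mulrA w2) mulKr //.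
have es' : a = si * (sj * \prod_(k < size s | (k != i) && (k != j)) nth 0 s k).
  rewrite es (big_nth 0) big_mkord (bigD1 i) //= (bigD1 j) //=; last by rewrite eq_sym.

apply: hna; exists sj, (u * \prod_(k < size s | (k != i) && (k != j)) nth 0 s k).
case: sjI => sjS _ sjnu _; split=> //.
- apply: SM; first by case: (proj2 (hU u) uU).
  apply: Sprod => k _.
  by have [] := hs (nth 0 s k) (mem_nth 0 (ltn_ord k)).
- by rewrite es' eij expr2; ring.
Qed.
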